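(* Let $\mathcal P$ be a finite-dimensional Poisson $n$-Lie algebra. Then for all $i,j\in\mathbb N$, all $1\le k\le n$ and all $i_1,\dots,i_k\in\mathbb N$: $$\mathcal P^i\cdot\mathcal P^j\subseteq\mathcal P^{i+j},\qquad [\mathcal P^{i_1},\dots,\mathcal P^{i_k},\mathcal P,\dots,\mathcal P]\subseteq\mathcal P^{i_1+\cdots+i_k-k+2},$$ $$\mathcal P^{(i)}\subseteq\mathcal P^{2^{i-1}},\qquad (\mathcal P^{(i)})^{(j)}=\mathcal P^{(i+j-1)},$$ where in the second relation the bracket has $n-k$ arguments equal to $\mathcal P$.
   Context: A Poisson $n$-Lie algebra is a commutative associative algebra $(\mathcal P,\cdot)$ with an $n$-linear skew-symmetric bracket satisfying the fundamental identity $[x_1,\dots,x_{n-1},[y_1,\dots,y_n]]=\sum_{i=1}^n[y_1,\dots,[x_1,\dots,x_{n-1},y_i],\dots,y_n]$ and the Leibniz rule $[y\cdot z,x_2,\dots,x_n]=y\cdot[z,x_2,\dots,x_n]+z\cdot[y,x_2,\dots,x_n]$. For subspaces, $X\cdot Y$ and $[X_1,\dots,X_n]$ denote the linear spans of the corresponding products/brackets. An ideal $\mathcal I$ is a subspace with $\mathcal P\cdot\mathcal I\subseteq\mathcal I$ and $[\mathcal I,\mathcal P,\dots,\mathcal P]\subseteq\mathcal I$. For an ideal $\mathcal I$: $\mathcal I^{(1)}=\mathcal I$, $\mathcal I^{(k+1)}=[\mathcal I^{(k)},\mathcal I^{(k)},\mathcal P,\dots,\mathcal P]+\mathcal I^{(k)}\cdot\mathcal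 I^{(k)}$; $\mathcal I^1=\mathcal I$, $\mathcal I^{k+1}=[\mathcal I^k,\mathcal I,\mathcal P,\dots,\mathcal P]+\mathcal I^k\cdot\mathcal I$. These are ideals; in particular $(\mathcal P^{(i)})^{(j)}$ is the $j$-th derived term of the ideal $\mathcal P^{(i)}$. *)

(* Defs.v *)
From HB Require Import structures.
From mathcomp Require Import all_boot all_algebra.
Set Implicit Arguments. Unset Strict Implicit. Unset Printing Implicit Defensive.
Import GRing.Theory.
Local Open Scope ring_scope.

Section PoissonNLie.
Variables (K : fieldType) (V : vectType K) (n : nat).

Definition updn (x : 'I_n -> V) (k : nat) (z : V) : 'I_n -> V :=
  fun j => if nat_of_ord j == k then z else x j.

Definition swapa (x : 'I_n -> V) (i j : 'I_n) : 'I_n -> V :=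
  fun t => if t == i then x j else if t == j then x i else x t.

Definition is_poisson_nlie (mul : V -> V -> V) (br : ('I_n -> V) -> V) : Prop :=
      (forall (a : K) x y z, mul (a *: x + y) z = a *: mul x z + mul y z) /\
      (forall x y, mul x y = mul y x) /\
      (forall x y z, mul x (mul y z) = mul (mul x y) z) /\
      (forall (x : 'I_n -> V) (k : 'I_n) (a : K) u v,
          br (updn x k (a *: u + v)) = a *: br (updn x k u) + br (updn x k v)) /\
      (forall (x : 'I_n -> V) (i j : 'I_n), i != j -> br (swapa x i j) = - br x) /\
      (forall x y : 'I_n -> V,
          br (updn x n.-1 (br y)) =
          \sum_(i < n) br (updn y i (br (updn x n.-1 (y i))))) /\
      (forall (x : 'I_n -> V) y z,
          br (updn x 0 (mul y z)) = mul y (br (updn x 0 z)) + mul z (br (updn x 0 y))).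

Variables (mul : V -> V -> V) (br : ('I_n -> V) -> V).

(* X . Y : span of all products x . y (spanned by products of basis vectors,
   as for prodv in falgebra.v) *)
Definition prodsp (X Y : {vspace V}) : {vspace V} :=
  <<[seq mul x y | x <- vbasis X, y <- vbasis Y]>>%VS.

(* [X_1, ..., X_n] : span of all brackets [x_1, ..., x_n], x_i in X_i,
   spanned by brackets of basis vectors (indices beyond \dim X_i give the
   zero vector, whose bracket is 0 by multilinearity). *)
Definition brsp (Xs : 'I_n -> {vspace V}) : {vspace V} :=
  <<[seq br (fun i => (vbasis (Xs i))`_(f i))
     | f : {ffun 'I_n -> 'I_(\dim (fullv : {vspace V}))}]>>%VS.

Definition brsp2 (A B : {vspace V}) : {vspace V} :=
  brsp (fun i : 'I_n => if nat_of_ord i == 0%N then A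
                        else if nat_of_ord i == 1%N then B else fullv).

(* lower central series: lcs_aux I m = I^(m+1) *)
Fixpoint lcs_aux (I : {vspace V}) (m : nat) : {vspace V} :=
  match m with
  | 0 => I
  | m'.+1 => (brsp2 (lcs_aux I m') I + prodsp (lcs_aux I m') I)%VS
  end.
(* I^k for k >= 1 (I^0 is set to I, unused) *)
Definition lpow (I : {vspace V}) (k : nat) : {vspace V} := lcs_aux I k.-1.

(* derived series: der_aux I m = I^(m+1) *)
Fixpoint der_aux (I : {vspace V}) (m : nat) : {vspace V} :=
  match m with
  | 0 => I
  | m'.+1 => (brsp2 (der_aux I m') (der_aux I m') + prodsp (der_aux I m') (der_aux I m'))%VS
  end.
(* I^(k) for k >= 1 *)
Definition dpow (I : {vspace V}) (k : nat) : {vspace V} := der_aux I k.-1.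

End PoissonNLie.

(* Main.v *)
Require Import Defs.
From HB Require Import structures.
From mathcomp Require Import all_boot all_algebra.
From mathcomp Require Import zify.
From Stdlib Require Import FunctionalExtensionality.
Import GRing.Theory.
Local Open Scope ring_scope.

Set Implicit Arguments. Unset Strict Implicit. Unset Printing Implicit Defensive.

Section Aux.
Variables (K : fieldType) (V : vectType K).

Lemma lin0 (h : V -> V) : (forall a u v, h (a *: u + v) = a *: h u + h v) -> h 0 = 0.
Proof.
move=> hL; have := hL 1 0 0; rewrite scale1r addr0 scale1r => E.
by apply: (addrI (h 0)); rewrite addr0 -E.
Qed.

Lemma linN (h : V -> V) : (forall a u v, h (a *: u + v) = a *: h u + h v) ->
  forall z, h (- z) = - h z.
Proof.
move=> hL z; have := hL (-1) z 0; rewrite addr0 (lin0 hL) addr0 !scaleN1r.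
by [].
Qed.

Lemma linD (h : V -> V) : (forall a u v, h (a *: u + v) = a *: h u + h v) ->
  forall u v, h (u + v) = h u + h v.
Proof. by move=> hL u v; have := hL 1 u v; rewrite !scale1r. Qed.

Lemma span_lin (h : V -> V) (S : {vspace V}) (G : seq V) :
  (forall a u v, h (a *: u + v) = a *: h u + h v) ->
  (forall g, g \in G -> h g \in S) -> forall z, z \in <<G>>%VS -> h z \in S.
Proof.
move=> hL; elim: G => [|g G IH] hG z.
  by rewrite span_nil memv0 => /eqP->; rewrite (lin0 hL) mem0v.
rewrite span_cons => /memv_addP [u /vlineP [k ->] [w wG ->]].
rewrite hL; apply: memvD; first by apply: memvZ; apply: hG; rewrite mem_head.
by apply: IH => // g' g'G; apply: hG; rewrite in_cons g'G orbT.
Qed.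

End Aux.

Section Main.
Variables (K : fieldType) (V : vectType K) (n : nat)
    (mul : V -> V -> V) (br : ('I_n -> V) -> V).
Hypothesis n2 : (2 <= n)%N.
Hypothesis mulL : forall (a : K) x y z, mul (a *: x + y) z = a *: mul x z + mul y z.
Hypothesis mulC : forall x y, mul x y = mul y x.
Hypothesis mulA : forall x y z, mul x (mul y z) = mul (mul x y) z.
Hypothesis brL : forall (x : 'I_n -> V) (k : 'I_n) (a : K) u v,
          br (updn x k (a *: u + v)) = a *: br (updn x k u) + br (updn x k v).
Hypothesis brS : forall (x : 'I_n -> V) (i j : 'I_n), i != j -> br (swapa x i j) = - br x.
Hypothesis brF : forall x y : 'I_n -> V,
          br (updn x n.-1 (br y)) =
          \sum_(i < n) br (updn y i (br (updn x n.-1 (y i)))).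
Hypothesis brLb : forall (x : 'I_n -> V) y z,
          br (updn x 0 (mul y z)) = mul y (br (updn x 0 z)) + mul z (br (updn x 0 y)).

Lemma mulR a x u v : mul x (a *: u + v) = a *: mul x u + mul x v.
Proof. by rewrite mulC mulL (mulC u) (mulC v). Qed.

Lemma mulN2 x u : mul x (- u) = - mul x u.
Proof. exact: (linN (fun a u v => mulR a x u v)). Qed.

Lemma mulD2 x u v : mul x (u + v) = mul x u + mul x v.
Proof. exact: (linD (fun a u v => mulR a x u v)). Qed.

Lemma brN (x : 'I_n -> V) (k : 'I_n) z : br (updn x k (- z)) = - br (updn x k z).
Proof. exact: (linN (brL x k)). Qed.

Lemma brD (x : 'I_n -> V) (k : 'I_n) u v : br (updn x k (u + v)) = br (updn x k u) + br (updn x k v).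
Proof. exact: (linD (brL x k)). Qed.

Lemma updn_id (x : 'I_n -> V) (k : 'I_n) : updn x k (x k) = x.
Proof.
apply: functional_extensionality => j; rewrite /updn.
by case: eqP => // /ord_inj ->.
Qed.

Definition i0 : 'I_n := Ordinal (leq_trans (isT : (0 < 2)%N) n2).
Definition i1 : 'I_n := Ordinal n2.
Lemma il_lt : (n.-1 < n)%N. Proof. by rewrite ltn_predL (leq_trans _ n2). Qed.
Definition il : 'I_n := Ordinal il_lt.

Lemma brsp_ind (h : V -> V) (Xs : 'I_n -> {vspace V}) (S : {vspace V}) :
  (forall a u v, h (a *: u + v) = a *: h u + h v) ->
  (forall y, (forall i, y i \in Xs i) -> h (br y) \in S) ->
  forall z, z \in brsp br Xs -> h z \in S.
Proof.
move=> hL hy; apply: span_lin => // g /mapP [f _ ->]; apply: hy => i.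
case: (ltnP (f i) (size (vbasis (Xs i)))) => hi.
  by apply: vbasis_mem; apply: mem_nth.
by rewrite nth_default // mem0v.
Qed.

Lemma prodsp_ind (h : V -> V) (X Y : {vspace V}) (S : {vspace V}) :
  (forall a u v, h (a *: u + v) = a *: h u + h v) ->
  (forall x y, x \in X -> y \in Y -> h (mul x y) \in S) ->
  forall z, z \in prodsp mul X Y -> h z \in S.
Proof.
move=> hL hy; apply: span_lin => // g /allpairsP [[x y] /= [hx hy' ->]].
by apply: hy; apply: vbasis_mem.
Qed.

Lemma mem_brsp (Xs : 'I_n -> {vspace V}) (x : 'I_n -> V) :
  (forall i, x i \in Xs i) -> br x \in brsp br Xs.
Proof.
suff H : forall m x, (forall i : 'I_n, (i < m)%N -> x i \in Xs i) ->
    (forall i : 'I_n, (m <= i)%N -> x i \in vbasis (Xs i)) -> br x \in brsp br Xs.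
  by move=> hx; apply: (H n) => // i hi; move: (ltn_ord i); rewrite ltnNge hi.
elim=> [|m IH] {}x h1 h2.
  apply: memv_span.
  have hf : forall i, (index (x i) (vbasis (Xs i)) < \dim (fullv : {vspace V}))%N.
    move=> i; apply: (leq_trans _ (dimvS (subvf (Xs i)))).
    by rewrite -{2}(size_tuple (vbasis (Xs i))) index_mem h2.
  apply/mapP; exists [ffun i => Ordinal (hf i)]; first by rewrite mem_enum.
  congr br; apply: functional_extensionality => i; rewrite ffunE /=.
  by rewrite nth_index ?h2.
case: (ltnP m n) => hm; last first.
  apply: IH => i hi; first by apply: h1; move: (ltn_ord i) hm; lia.
  by move: (ltn_ord i) hm hi; lia.
pose k : 'I_n := Ordinal hm.
rewrite -(updn_id x k); apply: (@span_lin _ _ _ _ (vbasis (Xs k)) (brL x k)) => [g gG|]; last first.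
  by rewrite (span_basis (vbasisP _)) h1 /=.
apply: IH => i hi; rewrite /updn.
  by case: eqP => [e|_]; [move: hi; rewrite e /= ltnn | apply: h1; move: hi; lia].
case: eqP => [e|ne]; first by rewrite (ord_inj (e : (i : nat) = k)).
apply: h2; move: hi ne; rewrite /=; lia.
Qed.

Lemma brsp_sub (Xs : 'I_n -> {vspace V}) (S : {vspace V}) :
  (forall x, (forall i, x i \in Xs i) -> br x \in S) -> (brsp br Xs <= S)%VS.
Proof.
move=> H; apply/subvP => z hz.
by apply: (@brsp_ind id Xs S) => //.
Qed.

Lemma mem_prodsp (X Y : {vspace V}) x y : x \in X -> y \in Y -> mul x y \in prodsp mul X Y.
Proof.
move=> hx hy.
have hx' : x \in <<vbasis X>>%VS by rewrite (span_basis (vbasisP _)).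
have hy' : y \in <<vbasis Y>>%VS by rewrite (span_basis (vbasisP _)).
apply: (@span_lin _ _ (fun z => mul z y) _ _ _ _ _ hx') => [a u v|g gX]; first exact: mulL.
apply: (@span_lin _ _ (fun z => mul g z) _ _ _ _ _ hy') => [a u v|g' gY]; first exact: mulR.
by apply: memv_span; apply: allpairs_f.
Qed.

Lemma prodsp_sub (X Y : {vspace V}) (S : {vspace V}) :
  (forall x y, x \in X -> y \in Y -> mul x y \in S) -> (prodsp mul X Y <= S)%VS.
Proof. by move=> H; apply/subvP => z hz; apply: (@prodsp_ind id X Y S). Qed.

Lemma mem_brsp2 (A B : {vspace V}) (x : 'I_n -> V) : x i0 \in A -> x i1 \in B -> br x \in brsp2 br A B.
Proof.
move=> hA hB; apply: mem_brsp => i.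
case: ifP => [/eqP e|_]; first by rewrite (ord_inj (e : (i : nat) = i0)).
case: ifP => [/eqP e|_]; first by rewrite (ord_inj (e : (i : nat) = i1)).
exact: memvf.
Qed.

Lemma brsp2_ind (h : V -> V) (A B : {vspace V}) (S : {vspace V}) :
  (forall a u v, h (a *: u + v) = a *: h u + h v) ->
  (forall y, y i0 \in A -> y i1 \in B -> h (br y) \in S) ->
  forall z, z \in brsp2 br A B -> h z \in S.
Proof.
move=> hL H; apply: brsp_ind => // y hy; apply: H.
  by have := hy i0.
by have := hy i1.
Qed.


Definition L m := lpow mul br fullv m.

Lemma L_succ m : (0 < m)%N -> L m.+1 = (brsp2 br (L m) fullv + prodsp mul (L m) fullv)%VS.
Proof. by case: m. Qed.

Lemma updn_eq (x : 'I_n -> V) (k : 'I_n) z : updn x k z k = z.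
Proof. by rewrite /updn eqxx. Qed.

Lemma updn_ne (x : 'I_n -> V) (k j : 'I_n) z : j != k -> updn x k z j = x j.
Proof. by rewrite /updn => /negbTE h; rewrite (_ : (nat_of_ord j == k) = (j == k)) // h. Qed.

Lemma brmove (x : 'I_n -> V) (i j : 'I_n) w : i != j ->
  br (updn x j w) = - br (updn (swapa x i j) i w).
Proof.
move=> ij.
have -> : updn (swapa x i j) i w = swapa (updn x j w) i j.
  apply: functional_extensionality => t; rewrite /swapa.
  case: (t =P i) => [->|ti]; first by rewrite !updn_eq.
  rewrite updn_ne; last by apply/eqP.
  case: (t =P j) => [->|tj]; first by rewrite updn_ne // eq_sym (negbTE ij).
  rewrite updn_ne; last by apply/eqP.
  by case: eqP.
by rewrite brS // opprK.
Qed.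

Lemma F1 m (x : 'I_n -> V) (j : 'I_n) : (0 < m)%N -> x j \in L m -> br x \in L m.+1.
Proof.
move=> m0 hx; rewrite L_succ //; apply: (subvP (addvSl _ _)).
case: (j =P i0) => [e|ne].
  by apply: mem_brsp2; [rewrite -e | exact: memvf].
have ij : i0 != j by rewrite eq_sym; apply/eqP.
rewrite -(updn_id x j) (brmove _ _ ij) memvN.
by apply: mem_brsp2; [rewrite updn_eq | exact: memvf].
Qed.

Lemma F2 m x p : (0 < m)%N -> x \in L m -> mul x p \in L m.+1.
Proof.
move=> m0 hx; rewrite L_succ //; apply: (subvP (addvSr _ _)).
by apply: mem_prodsp => //; exact: memvf.
Qed.

Lemma L2 (x : 'I_n -> V) : br x \in L 2.
Proof. by apply: (@F1 1 x i0) => //; exact: memvf. Qed.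

Lemma Lj (x : 'I_n -> V) (j : 'I_n) y z :
  br (updn x j (mul y z)) = mul y (br (updn x j z)) + mul z (br (updn x j y)).
Proof.
case: (j =P i0) => [->|ne]; first exact: brLb.
have ij : i0 != j by rewrite eq_sym; apply/eqP.
rewrite !(brmove _ _ ij).
have E := brLb (swapa x i0 j) y z.
by rewrite [in LHS]E !mulN2 opprD.
Qed.

Lemma FIj (x : 'I_n -> V) (j : 'I_n) y :
  br (updn x j (br y)) = \sum_(i < n) br (updn y i (br (updn x j (y i)))).
Proof.
case: (j =P il) => [->|ne]; first exact: brF.
have ij : il != j by rewrite eq_sym; apply/eqP.
rewrite (brmove _ _ ij).
have E := brF (swapa x il j) y.
rewrite [in LHS]E -sumrN; apply: eq_bigr => i _.
by rewrite (brmove x _ ij) brN.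
Qed.

Lemma C1 b : (0 < b)%N -> forall a, (0 < a)%N -> forall x y,
  x \in L a -> y \in L b -> mul x y \in L (a + b).
Proof.
elim: b => // b IH _ a a0 x y hx.
case: (posnP b) => [-> _|b0]; first by rewrite addn1; apply: F2.
rewrite L_succ // => /memv_addP [u hu [w hw ->]].
rewrite mulD2; apply: memvD.
- apply: (brsp2_ind (fun a' u' v' => mulR a' x u' v')) hu => g hg _.
  have := Lj g i0 x (g i0); rewrite updn_id => E.
  have -> : mul x (br g) = br (updn g i0 (mul x (g i0))) - mul (g i0) (br (updn g i0 x)).
    by rewrite E addrK.
  apply: memvB.
  + rewrite addnS; apply: (@F1 _ _ i0); first lia.
    by rewrite updn_eq; exact: IH.
  + rewrite mulC (_ : (a + b.+1 = a.+1 + b)%N); last lia.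
    apply: IH => //; apply: (@F1 _ _ i0) => //; by rewrite updn_eq.
- apply: (prodsp_ind (fun a' u' v' => mulR a' x u' v')) hw => w' p hw' _.
  by rewrite mulA addnS; apply: F2; [lia | exact: IH].
Qed.

Lemma two b : (0 < b)%N -> forall a, (0 < a)%N -> forall (s t : 'I_n) (x : 'I_n -> V),
  s != t -> x s \in L a -> x t \in L b -> br x \in L (a + b).
Proof.
elim: b => // b IH _ a a0 s t x st hs.
case: (posnP b) => [-> _|b0]; first by rewrite addn1; apply: (@F1 _ _ s).
move=> ht; rewrite -(updn_id x t); move: ht.
rewrite L_succ // => /memv_addP [u hu [w hw ->]].
rewrite brD; apply: memvD.
- apply: (brsp2_ind (brL x t)) hu => y hy0 _.
  rewrite FIj; apply: memv_suml => i _.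
  case: (i =P i0) => [->|ne].
  + rewrite addnS; apply: (@F1 _ _ i0); first lia.
    rewrite updn_eq; apply: (IH b0 a a0 s t) => //; first by rewrite updn_ne.
    by rewrite updn_eq.
  + have hin : br (updn x t (y i)) \in L a.+1.
      by apply: (@F1 _ _ s); rewrite // updn_ne.
    rewrite (_ : (a + b.+1 = a.+1 + b)%N); last lia.
    apply: (IH b0 a.+1 _ i i0) => //; first by apply/eqP.
      by rewrite updn_eq.
    by rewrite updn_ne //; apply/eqP => e; apply: ne.
- apply: (prodsp_ind (brL x t)) hw => w' p hw' _.
  rewrite Lj; apply: memvD.
  + rewrite (_ : (a + b.+1 = b + a.+1)%N); last lia.
    apply: C1 => //; apply: (@F1 _ _ s) => //; by rewrite updn_ne.
  + rewrite mulC addnS; apply: F2; first lia.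
    apply: (IH b0 a a0 s t) => //; [by rewrite updn_ne | by rewrite updn_eq].
Qed.

Lemma sum_upd (d : 'I_n -> nat) (j : 'I_n) c :
  (\sum_(i < n) (if i == j then c else d i) = c + \sum_(i < n | i != j) d i)%N.
Proof.
rewrite (bigD1 j) //= eqxx; congr (_ + _)%N; apply: eq_bigr => i /negbTE -> //.
Qed.

Lemma Gd N : forall (d : 'I_n -> nat) (x : 'I_n -> V), (\sum_(i < n) d i <= N)%N ->
  (forall i, 0 < d i)%N -> (forall i, x i \in L (d i)) ->
  br x \in L ((\sum_(i < n) d i) + 2 - n).
Proof.
elim: N => [|N IH] d x hN hd hx.
  by rewrite (bigD1 i0) //= in hN; have := hd i0; lia.
case: (boolP [exists j, 1 < d j]%N); last first.
  move=> /existsPn hno.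
  rewrite (eq_bigr (fun _ => 1%N)); last by move=> i _; have := hd i; have := hno i; lia.
  rewrite sum_nat_const card_ord muln1 (_ : (n + 2 - n = 2)%N); last lia.
  exact: L2.
case/existsP => j hj.
set R := (\sum_(i < n | i != j) d i)%N.
have hsum : (\sum_(i < n) d i = d j + R)%N by rewrite (bigD1 j).
have hR : (n <= R.+1)%N.
  have e1 : (1 + \sum_(i < n | i != j) 1 = n)%N.
    have e0 : (\sum_(i < n) 1 = n)%N by rewrite sum_nat_const card_ord muln1.
    by rewrite (bigD1 j) in e0.
  have : (\sum_(i < n | i != j) 1 <= R)%N by apply: leq_sum => i _; exact: hd.
  lia.
have [m' hm] : exists m', d j = m'.+1 by exists (d j).-1; lia.
have m0 : (0 < m')%N by lia.
have hupd : forall c w, w \in L c -> forall i, updn x j w i \in L (if i == j then c else d i).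
  move=> c w hw i; case: (i =P j) => [->|ne]; first by rewrite updn_eq.
  by rewrite updn_ne //; apply/eqP.
have IH1 : forall w, w \in L m' -> br (updn x j w) \in L (m' + R + 2 - n).
  move=> w hw; rewrite -(sum_upd d j m'); apply: IH; last exact: hupd.
    by rewrite sum_upd; rewrite hsum hm in hN; lia.
  by move=> i; case: (i == j).
have IH2 : forall w, br (updn x j w) \in L (1 + R + 2 - n).
  move=> w; rewrite -(sum_upd d j 1); apply: IH; last by apply: hupd; exact: memvf.
    by rewrite sum_upd; rewrite hsum hm in hN; lia.
  by move=> i; case: (i == j).
rewrite hsum hm -(updn_id x j).
have := hx j; rewrite hm L_succ // => /memv_addP [u hu [w hw ->]].
rewrite brD; apply: memvD.
- apply: (brsp2_ind (brL x j)) hu => y hy0 _.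
  rewrite FIj; apply: memv_suml => i _.
  case: (i =P i0) => [->|ne].
  + rewrite (_ : (m'.+1 + R + 2 - n = (m' + R + 2 - n).+1)%N); last lia.
    by apply: (@F1 _ _ i0); [lia | rewrite updn_eq; exact: IH1].
  + rewrite (_ : (m'.+1 + R + 2 - n = (1 + R + 2 - n) + m')%N); last lia.
    apply: (@two m' _ (1 + R + 2 - n) _ i i0) => //; first lia.
    * by apply/eqP.
    * by rewrite updn_eq.
    * by rewrite updn_ne //; apply/eqP => e; apply: ne.
- apply: (prodsp_ind (brL x j)) hw => w' p hw' _.
  rewrite Lj; apply: memvD.
  + rewrite (_ : (m'.+1 + R + 2 - n = m' + (1 + R + 2 - n))%N); last lia.
    by apply: (@C1 (1 + R + 2 - n) _ m') => //; lia.
  + rewrite mulC (_ : (m'.+1 + R + 2 - n = (m' + R + 2 - n).+1)%N); last lia.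
    by apply: F2; [lia | exact: IH1].
Qed.

Lemma C3 m : (der_aux mul br fullv m <= L (2 ^ m))%VS.
Proof.
elim: m => [|m IH] /=; first by rewrite expn0; exact: subvv.
rewrite subv_add; apply/andP; split.
- apply: brsp_sub => x hx.
  have h0 := hx i0; have h1 := hx i1; rewrite /= in h0 h1.
  rewrite expnS mul2n -addnn.
  apply: (@two _ _ _ _ i0 i1) => //; try exact: expn_gt0.
  + exact: (subvP IH).
  + exact: (subvP IH).
- apply: prodsp_sub => x y hx hy; rewrite expnS mul2n -addnn.
  by apply: C1; rewrite ?expn_gt0 //; exact: (subvP IH).
Qed.

Lemma der_add (I : {vspace V}) a b :
  der_aux mul br (der_aux mul br I a) b = der_aux mul br I (a + b).
Proof. by elim: b => [|b IH] /=; [rewrite addn0 | rewrite IH addnS]. Qed.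

Lemma main_sec :
  let P := (fullv : {vspace V}) in
  [/\ (forall i j : nat, (0 < i)%N -> (0 < j)%N ->
         (prodsp mul (lpow mul br P i) (lpow mul br P j)
            <= lpow mul br P (i + j))%VS),
      (forall (k : nat) (is_ : nat -> nat), (1 <= k <= n)%N ->
         (forall l, (l < k)%N -> (0 < is_ l)%N) ->
         (brsp br (fun t : 'I_n => if (nat_of_ord t < k)%N
                                   then lpow mul br P (is_ (nat_of_ord t)) else P)
            <= lpow mul br P ((\sum_(l < k) is_ l) + 2 - k))%VS),
      (forall i : nat, (0 < i)%N ->
         (dpow mul br P i <= lpow mul br P (2 ^ (i - 1)))%VS) &
      (forall i j : nat, (0 < i)%N -> (0 < j)%N ->
         dpow mul br (dpow mul br P i) j = dpow mul br P (i + j - 1))].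
Proof.
move=> P; split.
- move=> i j hi hj; apply: prodsp_sub => x y hx hy.
  exact: (C1 hj hi hx hy).
- move=> k is_ /andP [k1 kn] hpos; apply: brsp_sub => x hx.
  pose dn := fun t : nat => if (t < k)%N then is_ t else 1%N.
  have Hs : (\sum_(t < n) dn t = \sum_(l < k) is_ l + (n - k))%N.
    rewrite -(big_mkord xpredT dn) (big_cat_nat (leq0n k) kn) /=.
    congr addn.
      by rewrite big_mkord; apply: eq_bigr => t _; rewrite /dn ltn_ord.
    rewrite (eq_big_nat _ _ (F2 := fun _ => 1%N)).
      by rewrite sum_nat_const_nat muln1.
    by move=> t /andP [h _]; rewrite /dn ltnNge h.
  have := @Gd (\sum_(t < n) dn t) (fun t => dn t) x (leqnn _).
  rewrite Hs (_ : (\sum_(l < k) is_ l + (n - k) + 2 - n = \sum_(l < k) is_ l + 2 - k)%N); last lia.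
  apply.
    by move=> t; rewrite /dn; case: ifP => // h; exact: hpos.
  move=> t; have := hx t; rewrite /dn; case: ifP => //.
- move=> i hi; rewrite /dpow; case: i hi => // i _; rewrite subn1 /=.
  exact: C3.
- move=> i j hi hj; rewrite /dpow der_add; congr der_aux; lia.
Qed.

End Main.

Theorem lemma5p2 (K : fieldType) (V : vectType K) (n : nat)
    (mul : V -> V -> V) (br : ('I_n -> V) -> V) :
  (2 <= n)%N -> is_poisson_nlie mul br ->
  let P := (fullv : {vspace V}) in
  [/\ (forall i j : nat, (0 < i)%N -> (0 < j)%N ->
         (prodsp mul (lpow mul br P i) (lpow mul br P j)
            <= lpow mul br P (i + j))%VS),
      (forall (k : nat) (is_ : nat -> nat), (1 <= k <= n)%N ->
         (forall l, (l < k)%N -> (0 < is_ l)%N) ->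
         (brsp br (fun t : 'I_n => if (nat_of_ord t < k)%N
                                   then lpow mul br P (is_ (nat_of_ord t)) else P)
            <= lpow mul br P ((\sum_(l < k) is_ l) + 2 - k))%VS),
      (forall i : nat, (0 < i)%N ->
         (dpow mul br P i <= lpow mul br P (2 ^ (i - 1)))%VS) &
      (forall i j : nat, (0 < i)%N -> (0 < j)%N ->
         dpow mul br (dpow mul br P i) j = dpow mul br P (i + j - 1))].
Proof.
move=> n2 [mL [mC [mA [bL [bS [bF bLb]]]]]].
by apply: main_sec.
Qed.
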